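(* Let $p$ be a prime, $r\ge1$, and let $L$ be an even $\mathbb Z_p$-lattice which splits off $r$ hyperbolic planes, i.e. $L=U^r\oplus\tilde L$ for a hyperbolic plane $U$ over $\mathbb Z_p$ and an even $\mathbb Z_p$-lattice $\tilde L$. Let $\gamma\in D_L^r$ and let $M$ be a $\mathbb Z_p$-lattice with basis $(e_i)_{i=1,\dots,r}$ whose moment matrix $q((e_i)_i)$ lies in the class $q(\gamma)+\Lambda_r(\mathbb Z_p)$. Then there exists an isometric embedding $\phi:M\to L'$ with $(\phi(e_i))_{i=1,\dots,r}\in\gamma+L^r$.
   Context: A $\mathbb Z_p$-lattice is a free $\mathbb Z_p$-module of finite rank with a nondegenerate $\mathbb Q_p$-valued quadratic form $q$ and bilinear form $(x,y)=q(x+y)-q(x)-q(y)$; even means $q(L)\subseteq\mathbb Z_p$. $L'$ is the dual lattice and $D_L=L'/L$. A hyperbolic plane over $\mathbb Z_p$ has a basis $f,f'$ with $q(f)=q(f')=0$, $(f,f')=1$. For an $r$-tuple $\mathbf x=(x_1,\dots,x_r)$ its moment matrix is $q(\mathbf x)=\big((x_i,x_j)/2\big)_{i,j}$. $\Lambda_r(\mathbb Z_p)$ is the set of symmetric $r\times r$ matrices with diagonal entries in $\mathbb Z_p$ and off-diagonal entries in $\frac12\mathbb Z_p$; for $\gamma\in D_L^r$ the class $q(\gamma)+\Lambda_r(\mathbb Z_p)$ is $q(\tilde\gamma)+\Lambda_r(\mathbb Z_p)$ for any representative $\tilde\gamma\in L'^r$ (independent of the representative). *)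

(* Defs.v *)
From HB Require Import structures.
From mathcomp Require Import all_boot all_order all_algebra.
Set Implicit Arguments. Unset Strict Implicit. Unset Printing Implicit Defensive.
Import Order.TTheory GRing.Theory Num.Theory.
Local Open Scope ring_scope.

(* libraries.  We axiomatize a field K together with a subring Zp of  *)
(* K such that (K, Zp) is a model of (Q_p, Z_p): Zp is a valuation    *)
(* ring of K whose maximal ideal is p Zp, whose residue field is      *)
(* represented by 0,...,p-1, which is p-adically separated and       *)
(* complete.  These axioms characterize (Q_p, Z_p) up to unique       *)
(* isomorphism, so quantifying over all such models is the same as    *)
(* stating the result for Q_p.                                        *)
Record padic_model (p : nat) (K : fieldType) : Type := PadicModel {
  Zp : pred K;
  Zp1 : Zp 1;
  ZpB : forall x y, Zp x -> Zp y -> Zp (x - y);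
  ZpM : forall x y, Zp x -> Zp y -> Zp (x * y);
  Zp_valuation : forall x : K, Zp x \/ Zp x^-1;
  Zp_p_nonunit : ~ Zp (p%:R)^-1;
  Zp_local : forall x, Zp x -> ~ (exists y, Zp y /\ x = p%:R * y) -> Zp x^-1;
  Zp_residue : forall x, Zp x ->
    exists k : nat, (k < p)%N /\ exists y, Zp y /\ x = k%:R + p%:R * y;
  Zp_separated : forall x : K,
    (forall n : nat, exists y, Zp y /\ x = p%:R ^+ n * y) -> x = 0;
  Zp_complete : forall u : nat -> K, (forall k, Zp (u k)) ->
    (forall n : nat, exists N, forall m, (N <= m)%N ->
        exists y, Zp y /\ u m - u N = p%:R ^+ n * y) ->
    exists l : K, forall n : nat, exists N, forall m, (N <= m)%N ->
        exists y, Zp y /\ u m - l = p%:R ^+ n * y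
}.

Section Lattices.
Variables (p : nat) (K : fieldType) (S : padic_model p K).

(* A Z_p-lattice of rank n is modelled as Z_p^n inside K^n (row vectors)
   with bilinear form (x,y) = x G y^T, G its Gram matrix. *)
Definition bil (n : nat) (G : 'M[K]_n) (x y : 'rV[K]_n) : K := (x *m G *m y^T) 0 0.
Definition qf (n : nat) (G : 'M[K]_n) (x : 'rV[K]_n) : K := bil G x x / 2%:R.

Definition in_lattice (n : nat) (x : 'rV[K]_n) : Prop := forall j, Zp S (x 0 j).

Definition in_dual (n : nat) (G : 'M[K]_n) (x : 'rV[K]_n) : Prop :=
  forall y, in_lattice y -> Zp S (bil G x y).

Definition even_lattice (n : nat) (G : 'M[K]_n) : Prop :=
  forall x, in_lattice x -> Zp S (qf G x).

Definition moment (n r : nat) (G : 'M[K]_n) (X : 'M[K]_(r, n)) : 'M[K]_r :=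
  (2%:R)^-1 *: (X *m G *m X^T).

Definition in_Lambda (r : nat) (A : 'M[K]_r) : Prop :=
  A^T = A /\ (forall i, Zp S (A i i)) /\
  (forall i j, i != j -> Zp S (2%:R * A i j)).

(* L = U^r (+) L~ : there are f_1..f_r, f'_1..f'_r in L spanning r mutually
   orthogonal hyperbolic planes, and L is the orthogonal direct sum of their
   Z_p-span and its orthogonal complement L~ in L. *)
Definition splits_hyperbolic (n : nat) (G : 'M[K]_n) (r : nat) : Prop :=
  exists f f' : 'M[K]_(r, n),
    (forall i, in_lattice (row i f) /\ in_lattice (row i f')) /\
    f *m G *m f^T = 0 /\ f' *m G *m f'^T = 0 /\ f *m G *m f'^T = 1%:M /\
    forall x, in_lattice x ->
      exists (a c : 'rV[K]_r) (y : 'rV[K]_n),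
        (forall i, Zp S (a 0 i) /\ Zp S (c 0 i)) /\
        in_lattice y /\ y *m G *m f^T = 0 /\ y *m G *m f'^T = 0 /\
        x = a *m f + c *m f' + y.

End Lattices.

(* Main.v *)
Require Import Defs.
From HB Require Import structures.
From mathcomp Require Import all_boot all_order all_algebra.
From mathcomp Require Import ring.
Set Implicit Arguments. Unset Strict Implicit. Unset Printing Implicit Defensive.
Import Order.TTheory GRing.Theory Num.Theory.
Local Open Scope ring_scope.

Section Aux.
Variables (p : nat) (K : fieldType) (S : padic_model p K).
Local Notation Z := (@Defs.Zp p K S).

Lemma Z0 : Z 0. Proof. by rewrite -(subrr (1:K)); apply: Defs.ZpB; apply: Defs.Zp1. Qed.
Lemma ZN x : Z x -> Z (- x). Proof. move=> hx; rewrite -sub0r; apply: Defs.ZpB => //; exact: Z0. Qed.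
Lemma ZD x y : Z x -> Z y -> Z (x + y).
Proof. move=> hx hy; rewrite -(opprK y); apply: Defs.ZpB => //; exact: ZN. Qed.
Lemma Znat n : Z n%:R.
Proof. elim: n => [|n IH]; [exact: Z0 | rewrite mulrS; apply: ZD => //; exact: Defs.Zp1]. Qed.
Lemma Zsum (I : Type) (s : seq I) (P : pred I) (F : I -> K) :
  (forall i, P i -> Z (F i)) -> Z (\sum_(i <- s | P i) F i).
Proof. move=> h; apply: (big_ind Z) => //; [exact: Z0 | exact: ZD]. Qed.

Lemma two_neq0 : (2%:R : K) != 0.
Proof.
apply/negP => /eqP h2.
have Hp : p%:R = (odd p)%:R :> K.
  by rewrite {1}(divn_eq p 2) natrD natrM h2 mulr0 add0r modn2.
apply: (@Zp_p_nonunit p K S); rewrite Hp.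
case: (odd p) => /=; [rewrite invr1; exact: Defs.Zp1 | rewrite invr0; exact: Z0].
Qed.

Definition Zmx m k (M : 'M[K]_(m,k)) := forall i j, Z (M i j).
Lemma ZmxD m k (A B : 'M[K]_(m,k)) : Zmx A -> Zmx B -> Zmx (A + B).
Proof. by move=> hA hB i j; rewrite mxE; apply: ZD. Qed.
Lemma ZmxN m k (A : 'M[K]_(m,k)) : Zmx A -> Zmx (- A).
Proof. by move=> hA i j; rewrite mxE; apply: ZN. Qed.
Lemma ZmxB m k (A B : 'M[K]_(m,k)) : Zmx A -> Zmx B -> Zmx (A - B).
Proof. by move=> hA hB; apply: ZmxD => //; apply: ZmxN. Qed.
Lemma ZmxM m k l (A : 'M[K]_(m,k)) (B : 'M[K]_(k,l)) : Zmx A -> Zmx B -> Zmx (A *m B).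
Proof. by move=> hA hB i j; rewrite mxE; apply: Zsum => q _; apply: Defs.ZpM. Qed.
Lemma ZmxT m k (A : 'M[K]_(m,k)) : Zmx A -> Zmx A^T.
Proof. by move=> hA i j; rewrite mxE. Qed.
Lemma Zmx1 m : Zmx (1%:M : 'M[K]_m).
Proof. by move=> i j; rewrite mxE; apply: Znat. Qed.
Lemma Zmx0 m k : Zmx (0 : 'M[K]_(m,k)).
Proof. by move=> i j; rewrite mxE; apply: Z0. Qed.

Section Bil.
Variables (n : nat) (G : 'M[K]_n).
Definition Bm a b (U : 'M[K]_(a,n)) (V : 'M[K]_(b,n)) := U *m G *m V^T.
Lemma BmDl a b (U1 U2 : 'M[K]_(a,n)) (V : 'M[K]_(b,n)) : Bm (U1 + U2) V = Bm U1 V + Bm U2 V.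
Proof. by rewrite /Bm !mulmxDl. Qed.
Lemma BmDr a b (U : 'M[K]_(a,n)) (V1 V2 : 'M[K]_(b,n)) : Bm U (V1 + V2) = Bm U V1 + Bm U V2.
Proof. by rewrite /Bm linearD mulmxDr. Qed.
Lemma BmMl a b c (A : 'M[K]_(c,a)) (U : 'M[K]_(a,n)) (V : 'M[K]_(b,n)) : Bm (A *m U) V = A *m Bm U V.
Proof. by rewrite /Bm !mulmxA. Qed.
Lemma BmMr a b c (A : 'M[K]_(c,b)) (U : 'M[K]_(a,n)) (V : 'M[K]_(b,n)) : Bm U (A *m V) = Bm U V *m A^T.
Proof. by rewrite /Bm trmx_mul !mulmxA. Qed.
Lemma BmT a b (U : 'M[K]_(a,n)) (V : 'M[K]_(b,n)) : G^T = G -> (Bm U V)^T = Bm V U.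
Proof. by move=> hG; rewrite /Bm !trmx_mul trmxK hG mulmxA. Qed.
Lemma Bm_entry a b (U : 'M[K]_(a,n)) (V : 'M[K]_(b,n)) i j :
  Bm U V i j = bil G (row i U) (row j V).
Proof.
rewrite /bil /Bm -row_mul; set W := U *m G.
by rewrite !mxE; apply: eq_bigr => k _; rewrite !mxE.
Qed.
End Bil.
End Aux.

Lemma bil_entry (K : fieldType) n (G : 'M[K]_n) a (U : 'M[K]_(a,n)) (y : 'rV[K]_n) i :
  bil G (row i U) y = Bm G U y i 0.
Proof. by rewrite /bil /Bm -!row_mul mxE. Qed.

Theorem mainTheorem5 (p : nat) (K : fieldType) (S : padic_model p K)
  (n r : nat) (G : 'M[K]_n) (g : 'M[K]_(r, n)) (T : 'M[K]_r) :
  prime p -> (0 < r)%N ->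
  (* L = Z_p^n with symmetric nondegenerate Gram matrix G, even *)
  G^T = G -> G \in unitmx -> even_lattice S G ->
  splits_hyperbolic S G r ->
  (* gamma in D_L^r, represented by the rows of g, which lie in L' *)
  (forall i, in_dual S G (row i g)) ->
  (* M : lattice with basis e_1..e_r, moment matrix T (nondegenerate) *)
  T^T = T -> T \in unitmx ->
  in_Lambda S (T - moment G g) ->
  exists X : 'M[K]_(r, n),
    (forall i, in_dual S G (row i X)) /\
    (forall i, in_lattice S (row i X - row i g)) /\
    moment G X = T /\ row_free X.
Proof.
move=> _ _ hG hGu _ [f [f' [hfl [hff [hf'f' [hff' hdec]]]]]] hg hT hTu [hDs [hDd hDo]].
have Hff : Bm G f f = 0 := hff.
have Hf'f' : Bm G f' f' = 0 := hf'f'.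
have Hff' : Bm G f f' = 1%:M := hff'.
have Hf'f : Bm G f' f = 1%:M by rewrite -(BmT _ _ hG) Hff' trmx1.
have Zf : Zmx S f by move=> i j; have := (hfl i).1 j; rewrite mxE.
have Zf' : Zmx S f' by move=> i j; have := (hfl i).2 j; rewrite mxE.
have BfY : forall y, in_lattice S y -> Zmx S (Bm G f y) /\ Zmx S (Bm G f' y).
  move=> y hy; have [a [c [y0 [hac [hy0 [h0f [h0f' ->]]]]]]] := hdec y hy.
  have H0f : Bm G y0 f = 0 := h0f.
  have H0f' : Bm G y0 f' = 0 := h0f'.
  rewrite !BmDr !BmMr Hff Hf'f' Hff' Hf'f -(BmT y0 f hG) H0f -(BmT y0 f' hG) H0f'.
  rewrite !mul0mx !mul1mx trmx0 !addr0 add0r.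
  split; apply: ZmxT => i j; rewrite (ord1 i); [exact: (hac j).2 | exact: (hac j).1].
have Zg : forall y, in_lattice S y -> Zmx S (Bm G g y).
  by move=> y hy i j; rewrite (ord1 j) -bil_entry; apply: hg.
have Zh : Zmx S (Bm G g f).
  by move=> i j; rewrite Bm_entry; apply: hg; exact: (hfl j).1.
have Zh' : Zmx S (Bm G g f').
  by move=> i j; rewrite Bm_entry; apply: hg; exact: (hfl j).2.
have Hfg : Bm G f g = (Bm G g f)^T by rewrite (BmT _ _ hG).
have Hf'g : Bm G f' g = (Bm G g f')^T by rewrite (BmT _ _ hG).
set D := T - moment G g.
have ED : T - moment G g = D by [].
set h := Bm G g f.
set h' := Bm G g f'.
have Eh : Bm G g f = h by [].
have Eh' : Bm G g f' = h' by [].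
clearbody h h'.
rewrite Eh in Zh; rewrite Eh' in Zh'.
set P := h' - h' *m h^T.
set M := h' + h'^T - h' *m h^T - h *m h'^T.
have HM : M^T = M.
  rewrite /M !linearB !linearD /= !trmx_mul !trmxK.
  move: (h *m h'^T) (h' *m h^T) => u v; apply/matrixP=> i j; rewrite !mxE; ring.
have HMd : forall i, M i i = P i i + P i i.
  move=> i; rewrite /M /P.
  have -> : h *m h'^T = (h' *m h^T)^T by rewrite trmx_mul trmxK.
  move: (h' *m h^T) => v; rewrite !mxE; ring.
have ZM : Zmx S M.
  by apply: ZmxB; [apply: ZmxB; [apply: ZmxD; [|apply: ZmxT]|apply: ZmxM; [|apply: ZmxT]]|apply: ZmxM; [|apply: ZmxT]].
have ZP : Zmx S P by rewrite /P; apply: ZmxB => //; apply: ZmxM => //; apply: ZmxT.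
have EM : M = h' + h'^T - h' *m h^T - h *m h'^T by [].
have EP : P = h' - h' *m h^T by [].
clearbody D P M.
pose A := \matrix_(i, j) (if (i < j)%N then 2%:R * D i j - M i j
                          else if i == j then D i i - P i i else 0).
have HA : A + A^T = 2%:R *: D - M.
  apply/matrixP => i j; rewrite !mxE.
  case: (ltngtP i j) => [lt|gt|eq].
    have -> : (j == i) = false by apply/eqP => E; rewrite E ltnn in lt.
    by rewrite addr0.
  - have -> : (i == j) = false by apply/eqP => E; rewrite E ltnn in gt.
    have ED' : D j i = D i j by rewrite -[in RHS](ED) -hDs ED mxE.
    have EM' : M j i = M i j by rewrite -[in RHS]HM mxE.
    by rewrite ED' EM' add0r.
  - have E : i = j by apply: val_inj.
    subst j; rewrite eqxx HMd; ring.
have ZA : Zmx S A.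
  move=> i j; rewrite mxE; case: ifP => lt.
    apply: ZD; last by apply: ZN; apply: ZM.
    rewrite -ED; apply: hDo; apply/eqP => E.
    by rewrite E ltnn in lt.
  case: (i == j) => /=; last exact: (Z0 S).
  by apply: ZD; [rewrite -ED; apply: hDd| apply: ZN; apply: ZP].
clearbody A.
set B := 1%:M - h.
have ZB : Zmx S B by apply: ZmxB => //; apply: Zmx1.
set X := g + A *m f + B *m f'.
have key : Bm G X X = Bm G g g + 2%:R *: D.
  rewrite /X !BmDl !BmDr !BmMl !BmMr Hff Hf'f' Hff' Hf'f Hfg Hf'g Eh Eh'.
  have -> : 2%:R *: D = A + A^T + M by rewrite HA subrK.
  rewrite EM /B !mul0mx !mulmx0 !mul1mx !linearB /= trmx1 !mulmxBl !mulmx1 !mul1mx !addr0.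
  move: (Bm G g g) (h *m A^T) (A *m h^T) (h' *m h^T) (h *m h'^T) => a b c d e.
  apply/matrixP=> i j; rewrite !mxE; ring.
have hXX : Bm G X X = 2%:R *: T.
  rewrite key -ED; change (moment G g) with ((2%:R : K)^-1 *: Bm G g g); move: (Bm G g g) => a.
  apply/matrixP => i j; rewrite !mxE; field; exact: (two_neq0 S).
have EX : X - g = A *m f + B *m f'.
  by rewrite /X addrAC [g + _ - g]addrAC subrr add0r.
have ZXY : forall y, in_lattice S y -> Zmx S (Bm G X y).
  move=> y hy; have [h1 h2] := BfY y hy.
  rewrite /X !BmDl !BmMl; apply: ZmxD; [apply: ZmxD|]; [exact: Zg | apply: ZmxM | apply: ZmxM] => //.
clearbody X.
exists X; split; [|split; [|split]].
- by move=> i y hy; rewrite bil_entry; apply: ZXY.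
- move=> i j; have : Zmx S (X - g) by rewrite EX; apply: ZmxD; apply: ZmxM.
  by move=> /(_ i j); rewrite !mxE.
- rewrite /moment; change (X *m G *m X^T) with (Bm G X X); rewrite hXX scalerA mulVf ?scale1r //.
  exact: (two_neq0 S).
- have hu : Bm G X X \in unitmx by rewrite hXX unitmxZ // unitfE (two_neq0 S).
  rewrite /row_free eqn_leq rank_leq_row /= -{1}(mxrank_unit hu) /Bm.
  exact: leq_trans (mxrankM_maxl _ _) (mxrankM_maxl _ _).
Qed.
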